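(* Let $R\in[0,\tfrac34]$. Suppose the algorithm described in the context is run with penalty functions $f_j:[0,1]\to[0,1]$ ($j\in S$, possibly chosen depending on the advice $A$) that are continuous, nondecreasing, and satisfy $$1-\frac{1-R}{x}\;\le\; f_j(x)\;\le\;\frac{1-R}{1-x}\qquad\text{for all }x\in(0,1)$$ (and $f_j(1)\ge R$). Then for every instance $G$ and every advice $A$, $\mathsf{ALG}(G,A)\ge R\cdot \mathsf{OPT}(G)$; i.e. the algorithm is $R$-robust.
   Context: Setting (two-stage vertex-weighted bipartite matching with advice). A bipartite graph $G=(D,S,E)$ has offline vertices $S$, each $j\in S$ carrying a weight $w_j\ge 0$, and online vertices $D=D_1\sqcup D_2$ arriving in two stages. $E_1$ (resp. $E_2$) denotes the set of edges between $D_1$ (resp. $D_2$) and $S$. The advice is a matching $A\subseteq E_1$. $\mathsf{OPT}(G)$ denotes the maximum of $\sum_{j\in S\text{ covered by }M}w_j$ over all matchings $M\subseteq E$. Algorithm (parameters: functions $f_j:[0,1]\to[0,1]$, $j\in S$). First stage: after $D_1,E_1,A$ are revealed, let $\bar x$ be an optimal solution of (P1): maximize $\sum_{j\in S} w_j\bigl(x_j-\int_0^{x_j}f_j(t)\,dt\bigr)$ subject to $x_i:=\sum_{j:(i,j)\in E_1}x_{ij}\le 1$ ($i\in D_1$), $x_j:=\sum_{i:(i,j)\in E_1}x_{ij}\le 1$ ($j\in S$), $x_{ij}\ge0$. Second stage: after $D_2,E_2$ are revealed, let $\bar y$ be an optimal solution of (P2): maximize $\sum_{j\in S}w_jy_j$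 subject to $y_i:=\sum_{j:(i,j)\in E_2}y_{ij}\le 1$ ($i\in D_2$), $y_j:=\sum_{i:(i,j)\in E_2}y_{ij}\le 1-\bar x_j$ ($j\in S$), $y_{ij}\ge 0$. The algorithm's value is $\mathsf{ALG}(G,A)=\sum_{j\in S}w_j(\bar x_j+\bar y_j)$. *)

(* Defs.v *)
From HB Require Import structures.
From mathcomp Require Import all_boot all_order all_algebra.
From mathcomp Require Import all_classical all_reals all_analysis.
Set Implicit Arguments. Unset Strict Implicit. Unset Printing Implicit Defensive.
Import Order.TTheory GRing.Theory Num.Theory.
Import numFieldNormedType.Exports.
Local Open Scope classical_set_scope.
Local Open Scope ring_scope.

Section TwoStage.
Variables (R : realType) (D1 D2 S : finType).

Definition union_edges (E1 : D1 -> S -> bool) (E2 : D2 -> S -> bool)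
  : (D1 + D2)%type -> S -> bool :=
  fun d j => match d with inl i => E1 i j | inr i => E2 i j end.

Definition is_matching (T : finType) (E : T -> S -> bool) (M : {set T * S}) :=
  [/\ forall e, e \in M -> E e.1 e.2,
      forall i : T, #|[set j : S | (i, j) \in M]| <= 1 &
      forall j : S, #|[set i : T | (i, j) \in M]| <= 1]%N.

Definition covered (T : finType) (M : {set T * S}) (j : S) : bool :=
  [exists i : T, (i, j) \in M].

Definition matching_weight (T : finType) (w : S -> R) (M : {set T * S}) : R :=
  \sum_(j | covered M j) w j.

(** OPT(G): maximum weight of a matching of G (the empty matching has weight
    0 and weights are nonnegative, so 0 is a neutral start for the max). *)
Definition OPT (E1 : D1 -> S -> bool) (E2 : D2 -> S -> bool) (w : S -> R) : R :=
  \big[Num.max/0]_(M : {set (D1 + D2) * S} | `[< is_matching (union_edges E1 E2) M >])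
     matching_weight w M.

Definition load1 (E1 : D1 -> S -> bool) (x : D1 -> S -> R) (j : S) : R :=
  \sum_(i | E1 i j) x i j.

Definition P1_feasible (E1 : D1 -> S -> bool) (x : D1 -> S -> R) : Prop :=
  [/\ forall i j, E1 i j -> 0 <= x i j,
      forall i : D1, \sum_(j | E1 i j) x i j <= 1 &
      forall j : S, load1 E1 x j <= 1].

Definition P1_obj (E1 : D1 -> S -> bool) (w : S -> R) (f : S -> R -> R)
  (x : D1 -> S -> R) : R :=
  \sum_j w j * (load1 E1 x j -
     (\int[@lebesgue_measure R]_(t in `[0, load1 E1 x j]) f j t)).

Definition P1_optimal E1 w f (x : D1 -> S -> R) : Prop :=
  P1_feasible E1 x /\
  forall x', P1_feasible E1 x' -> P1_obj E1 w f x' <= P1_obj E1 w f x.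

Definition load2 (E2 : D2 -> S -> bool) (y : D2 -> S -> R) (j : S) : R :=
  \sum_(i | E2 i j) y i j.

Definition P2_feasible (E2 : D2 -> S -> bool) (xb : S -> R) (y : D2 -> S -> R)
  : Prop :=
  [/\ forall i j, E2 i j -> 0 <= y i j,
      forall i : D2, \sum_(j | E2 i j) y i j <= 1 &
      forall j : S, load2 E2 y j <= 1 - xb j].

Definition P2_obj (E2 : D2 -> S -> bool) (w : S -> R) (y : D2 -> S -> R) : R :=
  \sum_j w j * load2 E2 y j.

Definition P2_optimal E2 w (xb : S -> R) (y : D2 -> S -> R) : Prop :=
  P2_feasible E2 xb y /\
  forall y', P2_feasible E2 xb y' -> P2_obj E2 w y' <= P2_obj E2 w y.

Definition ALG E1 E2 (w : S -> R) (x : D1 -> S -> R) (y : D2 -> S -> R) : R :=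
  \sum_j w j * (load1 E1 x j + load2 E2 y j).

Definition admissible_penalty (rho : R) (g : R -> R) : Prop :=
  [/\ forall t, t \in `[0, 1] -> 0 <= g t <= 1,
      {within `[0, 1]%classic, continuous g},
      {in `[0, 1] &, {homo g : s t / s <= t}},
      (forall t, 0 < t < 1 -> 1 - (1 - rho) / t <= g t /\ g t <= (1 - rho) / (1 - t))
    & rho <= g 1].

End TwoStage.

(* Main.v *)
Require Import Defs.
From HB Require Import structures.
From mathcomp Require Import all_boot all_order all_algebra.
From mathcomp Require Import all_classical all_reals all_analysis.
From mathcomp Require Import lra ring.
Import Order.TTheory GRing.Theory Num.Theory.
Import numFieldNormedType.Exports.
Local Open Scope classical_set_scope.
Local Open Scope ring_scope.

Section Aux.
Context {R : realType}.
Local Notation mu := (@lebesgue_measure R).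

Lemma int_incr (g : R -> R) (a b : R) :
  {within `[0, 1], continuous g}%classic -> {in `[0, 1] &, {homo g : s t / s <= t}} ->
  0 <= a -> a <= b -> b <= 1 ->
  g a * (b - a) <= \int[mu]_(t in `[0, b]) g t - \int[mu]_(t in `[0, a]) g t <= g b * (b - a).
Proof.
move=> gc gm a0 ab b1.
have i01 : mu.-integrable `[0, 1]%classic (EFin \o g).
  by apply: continuous_compact_integrable => //; exact: segment_compact.
have iab : mu.-integrable `]a, b]%classic (EFin \o g).
  by apply: integrableS i01 => //; apply: subset_itvScc; rewrite bnd_simp ?(le_trans ab).
have i0b : mu.-integrable `[0, b]%classic (EFin \o g).
  by apply: integrableS i01 => //; apply: subset_itvl; rewrite bnd_simp.
rewrite (@Rintegral_itvB _ g (BLeft 0) (BRight b) a i0b) ?bnd_simp //.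
have icst : forall k : R, mu.-integrable `]a, b]%classic (EFin \o (fun=> k)).
  move=> k; apply: (@integrableS _ _ _ mu `[a, b]%classic) => //.
    exact: subset_itv_oc_cc.
  apply: continuous_compact_integrable; first exact: segment_compact.
  by move=> x; exact: cvg_cst.
have mab : measurable (`]a, b]%classic : set R) by [].
have muab : fine (mu `]a, b]%classic) = b - a.
  rewrite lebesgue_measure_itv/= lte_fin.
  have [ab'|ba] := ltP a b; first by rewrite -EFinD.
  have -> : a = b by apply/eqP; rewrite eq_le ab ba.
  by rewrite subrr.
apply/andP; split.
- rewrite -muab -Rintegral_cst //; apply: le_Rintegral => //.
  move=> t /=; rewrite in_itv/= => /andP[ha tb].
  by apply: gm; rewrite ?in_itv/=; try (apply/andP; split); lra.
- rewrite -muab -Rintegral_cst //; apply: le_Rintegral => //.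
  move=> t /=; rewrite in_itv/= => /andP[ha tb].
  by apply: gm; rewrite ?in_itv/=; try (apply/andP; split); lra.
Qed.


Lemma G_incr (g : R -> R) (a c : R) :
  {within `[0, 1], continuous g}%classic -> {in `[0, 1] &, {homo g : s t / s <= t}} ->
  0 <= a <= 1 -> 0 <= c <= 1 ->
  (c - a) * (1 - g c) <= (c - \int[mu]_(t in `[0, c]) g t) - (a - \int[mu]_(t in `[0, a]) g t).
Proof.
move=> gc gm /andP[a0 a1] /andP[c0 c1].
have [ac|ca] := leP a c.
  have /andP[_ h] := @int_incr g a c gc gm a0 ac c1.
  lra.
have /andP[h _] := @int_incr g c a gc gm c0 (ltW ca) a1.
lra.
Qed.

Lemma adm_up (rho : R) (g : R -> R) : 0 <= rho <= 3 / 4 -> admissible_penalty rho g ->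
  forall x, 0 <= x <= 1 -> g x * (1 - x) <= 1 - rho.
Proof.
move=> /andP[r0 r1] [gb gc gm gbd g1] x /andP[x0 x1].
have [xe|xl] := eqVneq x 1; first by rewrite xe subrr mulr0; lra.
have x1' : x < 1 by rewrite lt_neqAle xl x1.
have [xz|xp] := eqVneq x 0; last first.
  have x0' : 0 < x by rewrite lt_neqAle eq_sym xp x0.
  have hx : 0 < x < 1 by rewrite x0' x1'.
  have [_] := gbd x hx.
  by rewrite ler_pdivlMr ?subr_gt0.
rewrite xz subr0 mulr1.
have /andP[g00 g01] := gb 0 (ltac:(by rewrite in_itv/= lexx ler01)).
rewrite leNgt; apply/negP => hd.
pose t := (g 0 - (1 - rho)) / 2.
have t0 : 0 < t by rewrite /t divr_gt0 // subr_gt0.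
have t1 : t < 1 by rewrite /t ltr_pdivrMr //; lra.
have htt : 0 < t < 1 by rewrite t0 t1.
have [_] := gbd t htt.
rewrite ler_pdivlMr ?subr_gt0 // => ht.
have gt : g 0 <= g t by apply: gm; rewrite ?in_itv/= ?lexx ?ler01 ?(ltW t0) ?(ltW t1) //.
have : g 0 * (1 - t) <= 1 - rho.
  apply: le_trans ht; apply: ler_wpM2r; rewrite ?subr_ge0 ?(ltW t1) //.
have e : 2 * t = g 0 - (1 - rho) by rewrite /t mulrC divfK // pnatr_eq0.
nra.
Qed.

Lemma adm_low (rho : R) (g : R -> R) : 0 <= rho <= 3 / 4 -> admissible_penalty rho g ->
  forall x, 0 <= x <= 1 -> x * (1 - g x) <= 1 - rho.
Proof.
move=> /andP[r0 r1] [gb gc gm gbd g1] x /andP[x0 x1].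
have [xz|xp] := eqVneq x 0; first by rewrite xz mul0r; lra.
have x0' : 0 < x by rewrite lt_neqAle eq_sym xp x0.
have [xe|xl] := eqVneq x 1; first by rewrite xe mul1r; lra.
have x1' : x < 1 by rewrite lt_neqAle xl x1.
have hx : 0 < x < 1 by rewrite x0' x1'.
have [h _] := gbd x hx.
move: h; rewrite lerBlDr -lerBlDl => h.
rewrite mulrC -ler_pdivlMr //.
Qed.
End Aux.

Section Aux.
Context {R : realType}.
Lemma near_cont (g : R -> R) (x d eps : R) : {within `[0,1], continuous g}%classic ->
  0 <= x <= 1 -> 0 <= x + d <= 1 -> 0 < eps ->
  \forall t \near 0^'+, `|g x - g (x + t * d)| < eps.
Proof.
move=> gc x01 xd01 eps0.
have hc := (subspace_continuousP _ _).1 gc x (ltac:(by rewrite /= in_itv/=)).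
have H : \forall y \near within `[0,1]%classic (nbhs x), `|g x - g y| < eps.
  by move: hc => /cvgrPdist_lt /(_ eps eps0).
have hg : (fun t => x + t * d) @ 0^'+ --> x + 0 * d.
  apply: cvg_at_right_filter.
  apply: cvgD; first exact: cvg_cst.
  by apply: cvgM; [exact: cvg_id|exact: cvg_cst].
rewrite mul0r addr0 in hg.
have H3 : \forall s \near 0^'+, (`[0, 1]%classic (x + s * d) -> `|g x - g (x + s * d)| < eps) := hg _ H.
near=> t.
have t0 : 0 < t by near: t; exact: nbhs_right_gt.
have t1 : t < 1 by near: t; exact: nbhs_right_lt.
apply: (near H3 t); try done.
rewrite /mkset /= in_itv/=; move: x01 xd01 => /andP[? ?] /andP[? ?].
apply/andP; split; nra.
Unshelve. all: by end_near.
Qed.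

Lemma exists_t (I : finType) (g : I -> R -> R) (x d : I -> R) (eps : R) :
  (forall j, {within `[0,1], continuous g j}%classic) ->
  (forall j, 0 <= x j <= 1) -> (forall j, 0 <= x j + d j <= 1) -> 0 < eps ->
  exists t, 0 < t < 1 /\ forall j, `|g j (x j) - g j (x j + t * d j)| < eps.
Proof.
move=> gc x01 xd01 eps0.
have Hall : \forall t \near 0^'+, forall j, `|g j (x j) - g j (x j + t * d j)| < eps.
  by apply: filter_forall => j; exact: near_cont.
have HH : \forall t \near 0^'+, (0 < t < 1) /\ forall j, `|g j (x j) - g j (x j + t * d j)| < eps.
  have Hpos : \forall t \near (0:R)^'+, 0 < t := nbhs_right_gt 0.
  have Hlt : \forall t \near (0:R)^'+, t < 1 := nbhs_right_lt ltr01.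
  apply: (filterS _ (filterI Hpos (filterI Hlt Hall))) => t [tp [tl hj]].
  by split => //; rewrite tp tl.
by have [t ?] := filter_ex HH; exists t.
Qed.
End Aux.


Section Main.
Context {R : realType} {D1 D2 S : finType}.

Lemma load1_bounds (E1 : D1 -> S -> bool) (x : D1 -> S -> R) :
  P1_feasible E1 x -> forall j, 0 <= load1 E1 x j <= 1.
Proof. by move=> [h0 _ h2] j; rewrite h2 andbT; apply: sumr_ge0 => i; exact: h0. Qed.

Lemma sum_affine (I : finType) (P : pred I) (a b : I -> R) (t : R) :
  \sum_(k | P k) (a k + t * (b k - a k)) =
  \sum_(k | P k) a k + t * (\sum_(k | P k) b k - \sum_(k | P k) a k).
Proof. by rewrite big_split /= -mulr_sumr sumrB. Qed.

Lemma feas_comb (E1 : D1 -> S -> bool) (x x' : D1 -> S -> R) (t : R) :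
  P1_feasible E1 x -> P1_feasible E1 x' -> 0 <= t <= 1 ->
  P1_feasible E1 (fun i j => x i j + t * (x' i j - x i j)).
Proof.
move=> [a0 a1 a2] [b0 b1 b2] /andP[t0 t1]; split.
- move=> i j e; have := a0 i j e; have := b0 i j e; nra.
- move=> i; rewrite sum_affine; have := a1 i; have := b1 i; nra.
- move=> j; rewrite /load1 sum_affine; have := a2 j; have := b2 j; rewrite /load1; nra.
Qed.

Lemma aux_ineq (w t d v g0 gt : R) : w * (t * d * v) <= w * (gt - g0) ->
  w * g0 - w * gt <= - (t * (w * d * v)).
Proof.
move=> h; rewrite lerNr opprB -mulrBr.
have -> : t * (w * d * v) = w * (t * d * v) by ring.
exact: h.
Qed.

Lemma VI (E1 : D1 -> S -> bool) (w : S -> R) (f : S -> R -> R) (rho : R)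
  (xbar x' : D1 -> S -> R) :
  (forall j, 0 <= w j) -> (forall j, admissible_penalty rho (f j)) ->
  P1_optimal E1 w f xbar -> P1_feasible E1 x' ->
  \sum_j w j * (load1 E1 x' j - load1 E1 xbar j) * (1 - f j (load1 E1 xbar j)) <= 0.
Proof.
move=> w0 adm [fx opt] fx'.
set X := load1 E1 xbar; set X' := load1 E1 x'.
have X01 := load1_bounds _ _ fx; have X'01 := load1_bounds _ _ fx'.
have fc : forall j, {within `[0,1], continuous f j}%classic by move=> j; case: (adm j).
have fm : forall j, {in `[0, 1] &, {homo f j : s t / s <= t}} by move=> j; case: (adm j).
have fb : forall j t, t \in `[0, 1] -> 0 <= f j t <= 1 by move=> j; case: (adm j).
have key : forall t, 0 < t < 1 ->
    \sum_j w j * (X' j - X j) * (1 - f j (X j + t * (X' j - X j))) <= 0.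
  move=> t /andP[t0 t1].
  have tt01 : 0 <= t <= 1 by rewrite (ltW t0) (ltW t1).
  have ft := feas_comb _ _ _ t fx fx' tt01.
  have Lt : forall j, load1 E1 (fun i j => xbar i j + t * (x' i j - xbar i j)) j
      = X j + t * (X' j - X j) by move=> j; rewrite /load1 sum_affine.
  have Xt01 : forall j, 0 <= X j + t * (X' j - X j) <= 1 by move=> j; rewrite -Lt; exact: load1_bounds.
  have := opt _ ft; rewrite /P1_obj.
  under eq_bigr do rewrite Lt.
  rewrite -subr_ge0 -sumrB => H.
  have : t * \sum_j w j * (X' j - X j) * (1 - f j (X j + t * (X' j - X j))) <= 0.
    rewrite -oppr_ge0 mulr_sumr -sumrN; apply: (le_trans H); apply: ler_sum => j _.
    have h := G_incr _ _ _ (fc j) (fm j) (X01 j) (Xt01 j).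
    have e : X j + t * (X' j - X j) - X j = t * (X' j - X j) by ring.
    rewrite e in h.
    have h2 := ler_wpM2l (w0 j) h.
    exact: aux_ineq h2.
  by rewrite pmulr_rle0.
apply/ler_addgt0Pr => e e0; rewrite add0r.
pose W := \sum_j w j + 1.
have W0 : 0 < W by rewrite /W ltr_pwDr // sumr_ge0.
have Xd01 : forall j, 0 <= X j + (X' j - X j) <= 1 by move=> j; rewrite addrC subrK.
have [t [tt ht]] := exists_t _ _ _ _ _ fc X01 Xd01 (divr_gt0 e0 W0).
have K := key t tt.
have -> : \sum_j w j * (X' j - X j) * (1 - f j (X j)) =
   \sum_j w j * (X' j - X j) * (1 - f j (X j + t * (X' j - X j))) +
   \sum_j w j * (X' j - X j) * (f j (X j + t * (X' j - X j)) - f j (X j)).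
  by rewrite -big_split /=; apply: eq_bigr => j _; ring.
apply: (le_trans (lerD K (lexx _))); rewrite add0r.
apply: (@le_trans _ _ (\sum_j w j * (e / W))).
  apply: ler_sum => j _.
  have := ht j; rewrite ltr_norml => /andP[h1 h2].
  have /andP[a0 a1] := X01 j; have /andP[b0 b1] := X'01 j.
  have hd : (X' j - X j) * (f j (X j + t * (X' j - X j)) - f j (X j)) <= e / W.
    move: h1 h2 a0 a1 b0 b1; rewrite -/(X j) -/(X' j).
    set a := f j (X j) - _; set D := X' j - X j.
    have -> : f j (X j + t * D) - f j (X j) = - a by rewrite /a opprB.
    move=> h1 h2 a0 a1 b0 b1.
    have d1 : D <= 1 by rewrite /D; lra.
    have d2 : -1 <= D by rewrite /D; lra.
    nra.
  by rewrite -mulrA; apply: ler_wpM2l.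
rewrite -mulr_suml mulrA ler_pdivrMr // mulrC ler_wpM2l //; first exact: ltW.
by rewrite /W lerDl.
Qed.
End Main.


Section Match.
Context {R : realType} {D1 D2 S : finType}.

Lemma sum_ind_le1 (I : finType) (P c : pred I) :
  (#|[set k | c k]| <= 1)%N -> \sum_(k | P k) (if c k then (1:R) else 0) <= 1.
Proof.
move=> h; apply: (@le_trans _ _ (\sum_k (if c k then (1:R) else 0))).
  rewrite [X in _ <= X](bigID P) /= lerDl; apply: sumr_ge0 => k _; case: ifP => //.
rewrite -big_mkcond /= (eq_bigr (fun _ => 1%:R)) // -natr_sum sum1_card.
rewrite (_ : (1:R) = 1%:R) // ler_nat; apply: leq_trans h.
by rewrite leq_eqVlt; apply/orP; left; apply/eqP; apply: eq_card => k; rewrite !unfold_in /in_set /= asboolb.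
Qed.

Lemma card_inl (M : {set (D1 + D2) * S}) j :
  (#|[set d | (d, j) \in M]| <= 1)%N -> (#|[set i : D1 | (inl i, j) \in M]| <= 1)%N.
Proof.
move=> h; apply: leq_trans h.
have inj : injective (@inl D1 D2) by move=> x y [].
rewrite -(card_imset _ inj); apply: subset_leq_card; apply/fintype.subsetP => x /imsetP[i hi ->].
by move: hi; rewrite !unfold_in /in_set /= !asboolb.
Qed.

Lemma card_inr (M : {set (D1 + D2) * S}) j :
  (#|[set d | (d, j) \in M]| <= 1)%N -> (#|[set i : D2 | (inr i, j) \in M]| <= 1)%N.
Proof.
move=> h; apply: leq_trans h.
have inj : injective (@inr D1 D2) by move=> x y [].
rewrite -(card_imset _ inj); apply: subset_leq_card; apply/fintype.subsetP => x /imsetP[i hi ->].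
by move: hi; rewrite !unfold_in /in_set /= !asboolb.
Qed.
End Match.


Lemma main_M {R : realType} {D1 D2 S : finType}
  (E1 : D1 -> S -> bool) (E2 : D2 -> S -> bool) (w : S -> R)
  (rho : R) (f : S -> R -> R)
  (xbar : D1 -> S -> R) (ybar : D2 -> S -> R) (M : {set (D1 + D2) * S}) :
  0 <= rho <= 3 / 4 ->
  (forall j, 0 <= w j) ->
  (forall j, admissible_penalty rho (f j)) ->
  P1_optimal E1 w f xbar ->
  P2_optimal E2 w (load1 E1 xbar) ybar ->
  is_matching (union_edges E1 E2) M ->
  rho * matching_weight w M <= ALG E1 E2 w xbar ybar.
Proof.
move=> rr w0 adm opt1 [fy opt2] [Me Mr Mc].
have fx := opt1.1.
have X01 := load1_bounds _ _ fx.
set X := load1 E1 xbar.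
have {X01}X01 : forall j, 0 <= X j <= 1 := X01.
pose x' := fun (i : D1) (j : S) => if (inl i, j) \in M then (1:R) else 0.
pose y' := fun (i : D2) (j : S) => (if (inr i, j) \in M then (1:R) else 0) * (1 - X j).
have fx' : P1_feasible E1 x'.
  split.
  - by move=> i j _; rewrite /x'; case: ifP.
  - by move=> i; apply: sum_ind_le1; exact: (Mr (inl i)).
  - by move=> j; apply: sum_ind_le1; apply: card_inl; exact: Mc.
have fy' : P2_feasible E2 X y'.
  split.
  - move=> i j _; rewrite /y'; have := X01 j; case: ifP => _ /andP[a b]; rewrite ?mul1r ?mul0r // subr_ge0; exact: b.
  - move=> i; apply: le_trans (@sum_ind_le1 _ _ (E2 i) _ (Mr (inr i))).
    apply: ler_sum => j _; rewrite /y'; have := X01 j; case: ifP => _ /andP[a b]; rewrite ?mul1r ?mul0r // lerBlDr lerDl; exact: a.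
  - move=> j; rewrite /load2 /y' -mulr_suml.
    have h := @sum_ind_le1 _ _ (fun i => E2 i j) _ (card_inr _ _ (Mc j)).
    have /andP[a b] := X01 j.
    rewrite -[Z in _ <= Z]mul1r; apply: ler_wpM2r => //; [lra | exact: h].
have vi := VI _ _ _ _ _ _ w0 adm opt1 fx'.
have p2 := opt2 _ fy'.
have X'01 := load1_bounds _ _ fx'.
set X' := load1 E1 x'.
have {X'01}X'01 : forall j, 0 <= X' j <= 1 := X'01.
set Y' := load2 E2 y'.
have X'0 : forall j, 0 <= X' j by move=> j; have /andP[] := load1_bounds _ _ fx' j.
have Y'0 : forall j, 0 <= Y' j by move=> j; case: fy' => h _ _; apply: sumr_ge0 => i; exact: h.
have Fb : forall j, 0 <= f j (X j) <= 1 by move=> j; case: (adm j) => h _ _ _ _; apply: h; rewrite in_itv/=.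
have up := fun j => adm_up _ _ rr (adm j) (X j) (X01 j).
have low := fun j => adm_low _ _ rr (adm j) (X j) (X01 j).
rewrite /ALG /matching_weight.
apply: (@le_trans _ _ (\sum_j w j * (X j * f j (X j) + X' j * (1 - f j (X j)) + Y' j))).
  rewrite mulr_sumr big_mkcond /=; apply: ler_sum => j _.
  have /andP[f0 f1] := Fb j; have /andP[a0 a1] := X01 j.
  have hX := X'0 j; have hY := Y'0 j; have hu := up j; have hl := low j.
  have /andP[r0 r1] := rr.
  case: ifP => cov; last first.
    by apply: mulr_ge0 => //; nra.
  rewrite [rho * _]mulrC; apply: ler_wpM2l => //.
  move/existsP: cov => [[i|i] hd].
  + have hX1 : 1 <= X' j.
      suff: 1 <= load1 E1 x' j by [].
      rewrite /load1 (bigD1 i); last exact: (Me _ hd).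
      rewrite /= {1}/x' hd lerDl; apply: sumr_ge0 => k _; rewrite /x'; by case: ifP => _; rewrite ?ler01 ?lexx.
    nra.
  + have hY1 : 1 - X j <= Y' j.
      suff: 1 - X j <= load2 E2 y' j by [].
      rewrite /load2 (bigD1 i); last exact: (Me _ hd).
      rewrite /= {1}/y' hd mul1r lerDl; apply: sumr_ge0 => k _; rewrite /y'; case: ifP => _; rewrite ?mul1r ?mul0r ?lexx // subr_ge0; by case/andP: (X01 j).
    nra.
have -> : \sum_j w j * (X j * f j (X j) + X' j * (1 - f j (X j)) + Y' j) =
    \sum_j w j * X j + \sum_j w j * (X' j - X j) * (1 - f j (X j)) + \sum_j w j * Y' j.
  by rewrite -!big_split /=; apply: eq_bigr => j _; ring.
have -> : \sum_j w j * (X j + load2 E2 ybar j) = \sum_j w j * X j + \sum_j w j * load2 E2 ybar j.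
  by rewrite -big_split /=; apply: eq_bigr => j _; ring.
move: p2; rewrite /P2_obj => p2.
lra.
Qed.

Theorem theorem1 (R : realType) (D1 D2 S : finType)
  (E1 : D1 -> S -> bool) (E2 : D2 -> S -> bool) (w : S -> R)
  (A : {set D1 * S}) (rho : R) (f : S -> R -> R)
  (xbar : D1 -> S -> R) (ybar : D2 -> S -> R) :
  0 <= rho <= 3 / 4 ->
  (forall j, 0 <= w j) ->
  is_matching E1 A ->
  (forall j, admissible_penalty rho (f j)) ->
  P1_optimal E1 w f xbar ->
  P2_optimal E2 w (load1 E1 xbar) ybar ->
  rho * OPT E1 E2 w <= ALG E1 E2 w xbar ybar.
Proof.
move=> rr w0 _ adm opt1 opt2.
have ALG0 : 0 <= ALG E1 E2 w xbar ybar.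
  rewrite /ALG; apply: sumr_ge0 => j _; apply: mulr_ge0 => //; apply: addr_ge0.
    by have /andP[] := load1_bounds _ _ opt1.1 j.
  by case: opt2 => -[h _ _] _; apply: sumr_ge0 => i; exact: h.
rewrite /OPT.
apply: (big_ind (fun v => rho * v <= ALG E1 E2 w xbar ybar)).
- by rewrite mulr0.
- move=> a b ha hb; have /andP[r0 _] := rr; by rewrite maxr_pMr // ge_max ha hb.
- move=> M /asboolP hM; exact: main_M.
Qed.
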